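(* Let $P\in\mathcal{M}_1$. For every $X\in L^\infty(P)$ we have $\rho^P(X)\ge\widetilde\rho^P(X)=\widehat\rho^P(X)$, and consequently $C^P\subseteq\widehat C^P$.
   Context: $(\Omega,\mathcal{F})$ is a measurable space, $\mathcal{M}_1$ the set of probability measures on it, $\mathcal{X}$ the space of bounded $\mathcal{F}$-measurable real functions on $\Omega$ (bounded pointwise). For $P\in\mathcal{M}_1$, $L^\infty(P)=L^\infty(\Omega,\mathcal{F},P)$ and $\mathcal{P}^P=\{Q\in\mathcal{M}_1:Q\ll P\}$. Fix a penalty function $\alpha:\mathcal{M}_1\to\mathbb{R}\cup\{+\infty\}$ such that $\rho(X):=\sup_{Q\in\mathcal{M}_1}\{\mathbb{E}_Q[-X]-\alpha(Q)\}$ is real-valued for all $X\in\mathcal{X}$. For $X\in L^\infty(P)$ define $\rho^P(X)=\inf_{\{\widetilde X\in\mathcal{X}:P(\widetilde X=X)=1\}}\rho(\widetilde X)$, $\widehat\rho^P(X)=\sup_{Q\in\mathcal{P}^P}\{\mathbb{E}_Q[-X]-\alpha(Q)\}$, and $\widetilde\rho^P(X)=\sup_{Q\in\mathcal{M}_1}\inf_{\{\widetilde X\in\mathcal{X}:P(\widetilde X=X)=1\}}\{\mathbb{E}_Q[-\widetilde X]-\alpha(Q)\}$. Acceptance sets: $C^P=\{X\in L^\infty(P):\rho^P(X)\le0\}$, $\widehat C^P=\{X\in L^\infty(P):\widehat\rho^P(X)\le0\}$. *)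

(* Defs.v *)
From HB Require Import structures.
From mathcomp Require Import all_boot all_order all_algebra.
From mathcomp Require Import all_classical all_reals all_analysis.
Set Implicit Arguments. Unset Strict Implicit. Unset Printing Implicit Defensive.
Import Order.TTheory GRing.Theory Num.Theory.
Local Open Scope classical_set_scope.
Local Open Scope ring_scope.
Local Open Scope ereal_scope.

Section defs.
Context (d : measure_display) (T : measurableType d) (R : realType).

Definition bddX (X : T -> R) : Prop :=
  measurable_fun setT X /\ exists M : R, forall w, (`|X w| <= M)%R.

(* L^\infty(P), represented by (P-essentially bounded) measurable
   representatives; all functionals below depend only on the P-a.s. class. *)
Definition Linf (P : probability T R) (X : T -> R) : Prop :=
  measurable_fun setT X /\
  exists M : R, P [set w | (M < `|X w|)%R] = 0.

Definition pen_term (alpha : probability T R -> \bar R)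
  (Q : probability T R) (X : T -> R) : \bar R :=
  (\int[Q]_w (- X w)%:E) - alpha Q.

Definition rho (alpha : probability T R -> \bar R) (X : T -> R) : \bar R :=
  ereal_sup [set pen_term alpha Q X | Q in [set: probability T R]].

Definition reps (P : probability T R) (X : T -> R) : set (T -> R) :=
  [set Xt | bddX Xt /\ P [set w | Xt w = X w] = 1].

Definition rhoP (alpha : probability T R -> \bar R) (P : probability T R)
  (X : T -> R) : \bar R :=
  ereal_inf [set rho alpha Xt | Xt in reps P X].

Definition rho_hat (alpha : probability T R -> \bar R) (P : probability T R)
  (X : T -> R) : \bar R :=
  ereal_sup [set pen_term alpha Q X | Q in [set Q : probability T R | Q `<< P]].

Definition rho_tilde (alpha : probability T R -> \bar R) (P : probability T R)
  (X : T -> R) : \bar R :=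
  ereal_sup [set ereal_inf [set pen_term alpha Q Xt | Xt in reps P X]
            | Q in [set: probability T R]].

Definition CP alpha P : set (T -> R) := [set X | Linf P X /\ rhoP alpha P X <= 0].
Definition CP_hat alpha P : set (T -> R) := [set X | Linf P X /\ rho_hat alpha P X <= 0].

End defs.

(* Main.v *)
Require Import Defs.
From HB Require Import structures.
From mathcomp Require Import all_boot all_order all_algebra.
From mathcomp Require Import all_classical all_reals all_analysis.
From mathcomp Require Import lra measurable_realfun.
Set Implicit Arguments. Unset Strict Implicit.
Import Order.TTheory GRing.Theory Num.Theory.
Local Open Scope classical_set_scope.
Local Open Scope ring_scope.
Local Open Scope ereal_scope.

Section helpers.
Context d (T : measurableType d) (R : realType) (P : probability T R).

Lemma meas_eqset (f g : T -> R) : measurable_fun setT f -> measurable_fun setT g ->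
  measurable [set w | (f w = g w)%R].
Proof.
move=> mf mg.
have := measurable_funB mf mg measurableT (measurable_set1 0%R).
rewrite setTI.
suff -> : [set w | (f w = g w)%R] = ((f \- g)%R @^-1` [set 0%R]) by [].
apply/seteqP; split => w /=; first by move=> ->; rewrite subrr.
by move/eqP; rewrite subr_eq0 => /eqP.
Qed.

Lemma reps_null X Xt : measurable_fun setT X -> reps P X Xt ->
  P (~` [set w | Xt w = X w]) = 0.
Proof.
move=> mX [[mXt _] h1].
by rewrite probability_setC ?h1 ?subee//; apply: meas_eqset.
Qed.

Lemma int_reps (Q : probability T R) X Xt : Q `<< P -> measurable_fun setT X ->
  reps P X Xt -> \int[Q]_w (- Xt w)%:E = \int[Q]_w (- X w)%:E.
Proof.
move=> QP mX hXt.
have mXt := hXt.1.1.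
apply: ae_eq_integral => //.
- by apply/measurable_EFinP; apply: measurable_funN.
- by apply/measurable_EFinP; apply: measurable_funN.
apply: (null_dominates_ae_eq measurableT QP).
exists (~` [set w | Xt w = X w]); split.
- by apply: measurableC; apply: meas_eqset.
- exact: reps_null.
- by move=> w /= h heq; apply: h => _; rewrite heq.
Qed.


Lemma le_Ny (x : \bar R) : (forall r : R, x <= r%:E) -> x = -oo.
Proof.
case: x => [r| |] h //.
- have := h (r - 1)%R; rewrite lee_fin => H; exfalso; lra.
- by have := h 0%R.
Qed.

Lemma prob1 (S : set T) : measurable S -> P (~` S) = 0 -> P S = 1.
Proof.
move=> mS h; have := probability_setC P (measurableC mS).
by rewrite setCK h sube0.
Qed.

Lemma reps_nonempty X : Linf P X -> exists X0, reps P X X0.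
Proof.
move=> [mX [M hM]].
pose B := [set w | (`|X w| <= M)%R].
have mB : measurable B.
  have mN : measurable_fun setT (Num.norm \o X) by apply: measurableT_comp.
  have := mN measurableT _ (measurable_itv `]-oo, M]).
  rewrite setTI.
  suff -> : B = ((Num.norm \o X) @^-1` `]-oo, M]) by [].
  by apply/seteqP; split => w /=; rewrite in_itv /=.
have PB : P B = 1.
  apply: prob1 => //.
  rewrite -hM; congr (P _); apply/seteqP; split => w /=; rewrite /B /= ltNge //.
  by move/negP. by move=> h; apply/negP.
exists (fun w => X w * \1_B w)%R; rewrite /reps /bddX /=; split; first split.
- by apply: measurable_funM => //; apply: measurable_indic.
- exists `|M|%R => w; rewrite normrM /indic.
  case: (boolP (w \in B)) => wB.
  + rewrite normr1 mulr1; rewrite inE in wB; exact: le_trans wB (ler_norm _).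
  + by rewrite normr0 mulr0.
- apply/le_anti/andP; split; first by apply: probability_le1; apply: meas_eqset => //; apply: measurable_funM => //; apply: measurable_indic.
  rewrite -PB; apply: le_measure; rewrite ?inE //.
  + by apply: meas_eqset => //; apply: measurable_funM => //; apply: measurable_indic.
  + by move=> w Bw /=; rewrite indicE mem_set // mulr1.
Qed.


Lemma bdd_int (Q : probability T R) (f : T -> R) (M : R) :
  measurable_fun setT f -> (forall w, (`|f w| <= M)%R) ->
  Q.-integrable setT (EFin \o f).
Proof.
move=> mf hM; apply: measurable_bounded_integrable => //.
- exact: le_lt_trans (probability_le1 Q measurableT) (ltry _).
- exists M; split; first exact: num_real.
  by move=> N /ltW hN w _ /=; exact: le_trans (hM w) hN.
Qed.

Lemma unbdd (alpha : probability T R -> \bar R) (Q : probability T R) X X0 A :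
  alpha Q != -oo -> measurable_fun setT X -> reps P X X0 -> measurable A ->
  P A = 0 -> Q A != 0 -> forall r : R,
  exists Xt, reps P X Xt /\ pen_term alpha Q Xt <= r%:E.
Proof.
move=> ha mX hX0 mA PA QA r.
have [[mX0 [M0 hM0]] h0] := hX0.
have iX0 : Q.-integrable setT (EFin \o (fun w => - X0 w)%R).
  apply: (@bdd_int Q _ M0); first exact: measurable_funN.
  by move=> w; rewrite normrN.
set c := \int[Q]_w (- X0 w)%:E.
have cfin : c \is a fin_num by apply: integrable_fin_num iX0.
case ha' : (alpha Q) => [a| |]; last by rewrite ha' in ha.
2: by exists X0; split => //; rewrite /pen_term ha' /= addeNy leNye.
have QAfin : Q A \is a fin_num.
  rewrite fin_numElt (lt_le_trans _ (measure_ge0 _ _)) ?ltNyr //=.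
  exact: le_lt_trans (probability_le1 Q mA) (ltry _).
set q := fine (Q A).
have q0 : (0 < q)%R.
  apply: fine_gt0; rewrite lt0e QA measure_ge0 /=.
  exact: le_lt_trans (probability_le1 Q mA) (ltry _).
set k := (`|fine c - r - a| / q)%R.
pose Xk w := (X0 w + k * \1_A w)%R.
have mK : measurable_fun setT (fun w => k * \1_A w)%R.
  by apply: measurable_funM => //; apply: measurable_indic.
have i1 w : (`|(\1_A w : R)| <= 1)%R.
  by rewrite /indic; case: (_ \in _); rewrite ?normr1 ?normr0.
have bK w : (`|k * \1_A w| <= `|k|)%R.
  by rewrite normrM; apply: ler_piMr => //.
have mXk : measurable_fun setT Xk by apply: measurable_funD.
exists Xk; split.
  split; first split => //.
    exists (M0 + `|k|)%R => w; apply: le_trans (ler_normD _ _) _.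
    by apply: lerD.
  apply: prob1; first by apply: meas_eqset.
  apply/eqP; rewrite eq_le measure_ge0 andbT.
  have mC : measurable (~` [set w | X0 w = X w]).
    by apply: measurableC; apply: meas_eqset.
  apply: le_trans (_ : P (~` [set w | X0 w = X w] `|` A) <= _).
    apply: le_measure; rewrite ?inE //.
    - by apply: measurableC; apply: meas_eqset.
    - exact: measurableU.
    - move=> w /= nK; case: (pselect (A w)) => Aw; [by right|left => h].
      by apply: nK; rewrite /Xk indicE memNset // mulr0 addr0.
  apply: le_trans (measureU2 _ mC mA) _.
  have h : P (~` [set w | X0 w = X w]) = 0 by exact: reps_null mX hX0.
  change (P (~` [set w | X0 w = X w]) + P A <= 0).
  by rewrite h PA adde0.
have iK : Q.-integrable setT (EFin \o (fun w => k * \1_A w)%R).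
  exact: (@bdd_int Q _ `|k|%R).
rewrite /pen_term.
have -> : \int[Q]_w (- Xk w)%:E = \int[Q]_w ((- X0 w)%:E - (k * \1_A w)%:E).
  by apply: eq_integral => w _; rewrite /Xk opprD EFinB.
rewrite integralB_EFin //.
have -> : \int[Q]_w (k * \1_A w)%:E = k%:E * Q A.
  rewrite (eq_integral (fun w => k%:E * (\1_A w)%:E)); last by move=> w _; rewrite EFinM.
  rewrite integralZl //; last exact: integrable_indic.
  by rewrite integral_indic // setIT.
rewrite -/c ha' -(fineK cfin) -(fineK QAfin) -EFinM -!EFinB lee_fin.
have kq : (k * q = `|fine c - r - a|)%R by rewrite /k divfK // gt_eqF.
rewrite -/q kq; have := ler_norm (fine c - r - a)%R; lra.
Qed.


Lemma nondom (Q : probability T R) : ~ (Q `<< P) ->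
  exists A, [/\ measurable A, P A = 0 & Q A != 0].
Proof.
move=> nQP; apply: contrapT => hn; apply: nQP.
apply/null_content_dominatesP => A mA PA0.
apply/eqP/negPn/negP => QA; apply: hn; exists A; split => //.
Qed.

End helpers.

Unset Implicit Arguments. Set Strict Implicit.

Theorem lemma3p5 (d : measure_display) (T : measurableType d) (R : realType)
  (alpha : probability T R -> \bar R)
  (halpha : forall Q, alpha Q != -oo)
  (hrho : forall X : T -> R, bddX X -> rho alpha X \is a fin_num)
  (P : probability T R) :
  (forall X : T -> R, Linf P X ->
     rho_tilde alpha P X <= rhoP alpha P X /\
     rho_tilde alpha P X = rho_hat alpha P X) /\
  CP alpha P `<=` CP_hat alpha P.
Proof.
have main : forall X : T -> R, Linf P X ->
     rho_tilde alpha P X <= rhoP alpha P X /\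
     rho_tilde alpha P X = rho_hat alpha P X.
  move=> X hX; have mX := hX.1.
  have [X0 hX0] := reps_nonempty hX.
  split.
    apply: ge_ereal_sup => _ [Q _ <-].
    apply: le_ereal_inf_tmp => _ [Xt hXt <-].
    apply: (@le_trans _ _ (pen_term alpha Q Xt)).
      by apply: ereal_inf_lbound; exists Xt.
    by apply: ereal_sup_ubound; exists Q.
  apply/le_anti/andP; split.
    apply: ge_ereal_sup => _ [Q _ <-].
    case: (pselect (Q `<< P)) => QP.
      apply: (@le_trans _ _ (pen_term alpha Q X)).
        apply: ge_ereal_inf; exists (pen_term alpha Q X0); first by exists X0.
        by rewrite /pen_term (int_reps QP mX hX0).
      by apply: ereal_sup_ubound; exists Q.
    have [A [mA PA QA]] := nondom QP.
    suff -> : ereal_inf [set pen_term alpha Q Xt | Xt in reps P X] = -oo by rewrite leNye.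
    apply: le_Ny => r.
    have [Xt [hXt hle]] := unbdd (halpha Q) mX hX0 mA PA QA r.
    apply: ge_ereal_inf; exists (pen_term alpha Q Xt) => //; by exists Xt.
  apply: ge_ereal_sup => _ [Q QP <-].
  apply: (@le_trans _ _ (ereal_inf [set pen_term alpha Q Xt | Xt in reps P X])); last first.
    by apply: ereal_sup_ubound; exists Q.
  apply: le_ereal_inf_tmp => _ [Xt hXt <-].
  by rewrite /pen_term (int_reps QP mX hXt).
split => // X [hX hC]; split => //.
have [h1 h2] := main X hX.
by rewrite -h2; exact: le_trans h1 hC.
Qed.
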